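(* Let $\alpha>0$ be a constant. If $g(n)\le \alpha n^2$ for all $n$, then $f_4(n)\le \alpha(1+o(1))\frac{n^2}{2}$ as $n\to\infty$.
   Context: $K_n$ is the complete graph and $K_n^{(4)}$ the complete $4$-uniform hypergraph on $n$ vertices. A complete $4$-partite $4$-graph is given by pairwise disjoint nonempty vertex sets $V_1,\dots,V_4$, with edges all $4$-sets meeting each $V_i$ in exactly one vertex; $f_4(n)$ is the minimum number of complete $4$-partite $4$-graphs whose edge sets partition the edge set of $K_n^{(4)}$. A complete bipartite subgraph of a graph $G$ has two disjoint nonempty vertex classes $X,Y$ and edge set all $xy$ with $x\in X,y\in Y$ (all these being edges of $G$). For graphs $G,H$, a block is a set $E(B_1)\times E(B_2)$ where $B_1$ is a complete bipartite subgraph of $G$ and $B_2$ is a complete bipartite subgraph of $H$; $g(G,H)$ is the minimum number of blocks partitioning $E(G)\times E(H)$, and $g(n)=g(K_n,K_n)$. *)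

(* Defs.v *)
From mathcomp Require Import all_boot all_order all_algebra.
From mathcomp Require Import reals.
Set Implicit Arguments. Unset Strict Implicit. Unset Printing Implicit Defensive.

Section Partitions.
Variables (U Str : finType) (valid : pred Str) (E : Str -> {set U}) (S : {set U}).

Definition is_partition k (F : {ffun 'I_k -> Str}) : bool :=
  [forall j, valid (F j) && (E (F j) \subset S)] &&
  [forall u in S, #|[set j | u \in E (F j)]| == 1].

Definition has_partition (k : nat) : bool :=
  [exists F : {ffun 'I_k -> Str}, is_partition F].

Lemma has_partition_card (x0 : Str) :
  (forall u, u \in S -> exists x, valid x /\ E x = [set u]) ->
  exists k, has_partition k.
Proof.
move=> Hs; exists #|S|; apply/existsP.
pose F := [ffun j : 'I_#|S| =>
             odflt x0 [pick x | valid x && (E x == [set enum_val j])]].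
have HF j : valid (F j) /\ E (F j) = [set enum_val j].
  rewrite /F ffunE; case: pickP => [x /andP[vx /eqP ->] //|H0].
  have [x [vx ex]] := Hs _ (enum_valP j).
  by move: (H0 x); rewrite vx ex eqxx.
exists F; apply/andP; split.
  apply/forallP => j; have [vj ej] := HF j; rewrite vj ej /=.
  by rewrite sub1set enum_valP.
apply/forall_inP => u uS.
have -> : [set j | u \in E (F j)] = [set enum_rank_in uS u].
  apply/setP => j; rewrite !inE; have [_ ->] := HF j; rewrite inE.
  apply/eqP/eqP => [Hu|->]; first by apply: enum_val_inj; rewrite enum_rankK_in.
  by rewrite enum_rankK_in.
by rewrite cards1.
Qed.

Definition min_partition_size (x0 : Str)
  (H : forall u, u \in S -> exists x, valid x /\ E x = [set u]) : nat :=
  ex_minn (has_partition_card x0 H).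

End Partitions.

Definition K4edges (n : nat) : {set {set 'I_n}} := [set e : {set 'I_n} | #|e| == 4].

Definition complete4partite (n : nat) (V : {ffun 'I_4 -> {set 'I_n}}) : bool :=
  [forall i, V i != set0] &&
  [forall i, forall j, (i != j) ==> [disjoint V i & V j]].

Definition edges4 (n : nat) (V : {ffun 'I_4 -> {set 'I_n}}) : {set {set 'I_n}} :=
  [set e : {set 'I_n} | (#|e| == 4) && [forall i, #|e :&: V i| == 1]].

Lemma f4_single (n : nat) (e : {set 'I_n}) : e \in K4edges n ->
  exists V, complete4partite V /\ edges4 V = [set e].
Proof.
rewrite inE => /eqP he.
have hs : size (enum e) = 4 by rewrite -cardE.
have hu := enum_uniq (pred_of_set e).
have eE : e = [set x in enum e] by apply/setP => x; rewrite inE mem_enum.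
move: hs hu eE; case: (enum e) => [|a [|b [|c [|d [|]]]]] //= _ hu eE.
move: hu; rewrite !inE !negb_or => /and4P[/and3P[ab ac ad] /andP[bc bd] cd _].
exists [ffun i : 'I_4 => [set nth a [:: a; b; c; d] i]]; split.
  apply/andP; split.
    by apply/forallP => i; rewrite ffunE; apply/set0Pn; exists (nth a [:: a; b; c; d] i); rewrite inE.
  apply/forallP => i; apply/forallP => j; apply/implyP => ij.
  rewrite !ffunE disjoints1 inE.
  case: i j ij => [[|[|[|[|i]]]] Hi] [[|[|[|[|j]]]] Hj] //= ij.
  all: try by rewrite ?(eq_sym b) ?(eq_sym c) ?(eq_sym d).
apply/setP => f; rewrite !inE.
have Hall : [forall i, #|f :&: [ffun i : 'I_4 => [set nth a [:: a; b; c; d] i]] i| == 1] =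
            [&& a \in f, b \in f, c \in f & d \in f].
  apply/forallP/and4P => [H|[ha hb hc hd] i].
    have g (i : 'I_4) : nth a [:: a; b; c; d] i \in f.
      move/eqP: (H i); rewrite ffunE.
      case: (boolP (nth a [:: a; b; c; d] i \in f)) => // hn.
      by rewrite disjoint_setI0 ?cards0 // disjoint_sym disjoints1.
    by split; [exact: (g ord0) | exact: (g (@Ordinal 4 1 isT)) | exact: (g (@Ordinal 4 2 isT)) | exact: (g (@Ordinal 4 3 isT))].
  rewrite ffunE setIC (setIidPl _) ?cards1 // sub1set.
  by case: i => [[|[|[|[|i]]]] ?].
rewrite Hall; apply/idP/eqP => [/andP[/eqP hf /and4P[ha hb hc hd]]|->].
  apply/eqP; rewrite eq_sym eqEcard; apply/andP; split.
    by apply/subsetP => x; rewrite eE !inE => /or4P[] /eqP ->.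
  by rewrite hf -he.
by rewrite he eqxx eE !inE !eqxx !orbT.
Qed.

Definition f4 (n : nat) : nat :=
  @min_partition_size _ _ (@complete4partite n) (@edges4 n) (K4edges n)
    [ffun=> set0] (@f4_single n).

Definition Knedges (n : nat) : {set {set 'I_n}} := [set e : {set 'I_n} | #|e| == 2].

(* complete bipartite subgraph of K_n with classes (X, Y): disjoint, nonempty
   (all xy are then automatically edges of K_n) *)
Definition complete_bip (n : nat) (B : {set 'I_n} * {set 'I_n}) : bool :=
  [&& B.1 != set0, B.2 != set0 & [disjoint B.1 & B.2]].

Definition bip_edges (n : nat) (B : {set 'I_n} * {set 'I_n}) : {set {set 'I_n}} :=
  [set [set x; y] | x in B.1, y in B.2].

Definition block_valid (n : nat)
  (b : ({set 'I_n} * {set 'I_n}) * ({set 'I_n} * {set 'I_n})) : bool :=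
  complete_bip b.1 && complete_bip b.2.

Definition block_edges (n : nat)
  (b : ({set 'I_n} * {set 'I_n}) * ({set 'I_n} * {set 'I_n}))
  : {set {set 'I_n} * {set 'I_n}} :=
  setX (bip_edges b.1) (bip_edges b.2).

Definition KnKn (n : nat) : {set {set 'I_n} * {set 'I_n}} :=
  setX (Knedges n) (Knedges n).

Lemma bip_single (n : nat) (e : {set 'I_n}) : e \in Knedges n ->
  exists B, complete_bip B /\ bip_edges B = [set e].
Proof.
rewrite inE => /cards2P[a [b [ab ->]]].
exists ([set a], [set b]); split.
  apply/and3P; split; rewrite /=.
  - by apply/set0Pn; exists a; rewrite inE.
  - by apply/set0Pn; exists b; rewrite inE.
  - by rewrite disjoints1 inE.
apply/setP => f; rewrite inE; apply/imset2P/eqP => [[x y /=]|->].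
  by rewrite !inE => /eqP -> /eqP ->.
by exists a b; rewrite /= ?inE.
Qed.

Lemma block_single (n : nat) (p : {set 'I_n} * {set 'I_n}) : p \in KnKn n ->
  exists b, block_valid b /\ block_edges b = [set p].
Proof.
case: p => e1 e2; rewrite inE => /andP[/= h1 h2].
have [B1 [v1 E1]] := bip_single h1; have [B2 [v2 E2]] := bip_single h2.
exists (B1, B2); split; first by rewrite /block_valid v1 v2.
rewrite /block_edges /= E1 E2; apply/setP => -[x y].
by rewrite in_setX !inE xpair_eqE.
Qed.

Definition g (n : nat) : nat :=
  @min_partition_size _ _ (@block_valid n) (@block_edges n) (KnKn n)
    ((set0, set0), (set0, set0)) (@block_single n).

(* Main.v *)
Require Import Defs.
From mathcomp Require Import all_boot all_order all_algebra.
From mathcomp Require Import reals.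
From mathcomp Require Import zify ring lra.
Import Order.TTheory GRing.Theory Num.Theory.

Lemma card_nth_count (T : eqType) (x0 : T) (s : seq T) (p : pred T) :
  #|[set j : 'I_(size s) | p (nth x0 s j)]| = count p s.
Proof.
rewrite -[in RHS](mkseq_nth x0 s) /mkseq -val_enum_ord -map_comp count_map.
rewrite cardsE cardE /enum_mem size_filter.
rewrite (@eq_filter _ _ predT) // filter_predT.
by apply: eq_count => j.
Qed.

Definition o0 : 'I_4 := @Ordinal 4 0 isT.
Definition o1 : 'I_4 := @Ordinal 4 1 isT.
Definition o2 : 'I_4 := @Ordinal 4 2 isT.
Definition o3 : 'I_4 := @Ordinal 4 3 isT.

Lemma forall4 (p : pred 'I_4) : [forall i, p i] = [&& p o0, p o1, p o2 & p o3].
Proof.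
apply/forallP/and4P => [H|[h0 h1 h2 h3] i]; first by split; apply: H.
case: i => [[|[|[|[|m]]]] Hm] //.
- by have -> : Ordinal Hm = o0 by apply: val_inj.
- by have -> : Ordinal Hm = o1 by apply: val_inj.
- by have -> : Ordinal Hm = o2 by apply: val_inj.
- by have -> : Ordinal Hm = o3 by apply: val_inj.
Qed.

Definition mkV {n} (P0 P1 P2 P3 : pred 'I_n) : {ffun 'I_4 -> {set 'I_n}} :=
  [ffun i : 'I_4 => [set x | nth P0 [:: P0; P1; P2; P3] i x]].

Lemma set4E n (a b c d : 'I_n) : [set a; b; c; d] = [set x in [:: a; b; c; d]].
Proof. by apply/setP => x; rewrite !inE -!orbA. Qed.

Lemma card_set4I n (a b c d : 'I_n) (P : pred 'I_n) : uniq [:: a; b; c; d] ->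
  #|[set a; b; c; d] :&: [set x | P x]| = P a + P b + P c + P d.
Proof.
move=> hu.
have -> : [set a; b; c; d] :&: [set x | P x] = [set x in filter P [:: a; b; c; d]].
  by apply/setP => x; rewrite set4E !inE mem_filter !inE andbC.
rewrite cardsE; move/card_uniqP: (filter_uniq P hu) => ->.
by rewrite size_filter /= addn0 !addnA.
Qed.

Definition cnt4 {n} (P : pred 'I_n) (a b c d : 'I_n) : nat := P a + P b + P c + P d.

Lemma mem_edges4_mkV n (a b c d : 'I_n) (P0 P1 P2 P3 : pred 'I_n) :
  uniq [:: a; b; c; d] ->
  ([set a; b; c; d] \in edges4 (mkV P0 P1 P2 P3)) =
  [&& cnt4 P0 a b c d == 1, cnt4 P1 a b c d == 1,
      cnt4 P2 a b c d == 1 & cnt4 P3 a b c d == 1].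
Proof.
move=> hu; rewrite /edges4 inE forall4 !ffunE /=.
have -> : #|[set a; b; c; d]| == 4.
  by rewrite set4E cardsE; move/card_uniqP: hu => ->.
by rewrite !card_set4I.
Qed.

Lemma core_ord (a0 a1 a2 a3 b0 b1 b2 b3 c0 c1 c2 c3 d0 d1 d2 d3 : bool) :
  a1 + a0 <= 1 -> a2 + a0 <= 1 -> a3 + a0 <= 1 -> a2 + a1 <= 1 -> a3 + a1 <= 1 -> a3 + a2 <= 1 -> a1 + b0 <= 1 -> a2 + b0 <= 1 -> a3 + b0 <= 1 -> a2 + b1 <= 1 -> a3 + b1 <= 1 -> a3 + b2 <= 1 -> a1 + c0 <= 1 -> a2 + c0 <= 1 -> a3 + c0 <= 1 -> a2 + c1 <= 1 -> a3 + c1 <= 1 -> a3 + c2 <= 1 -> a1 + d0 <= 1 -> a2 + d0 <= 1 -> a3 + d0 <= 1 -> a2 + d1 <= 1 -> a3 + d1 <= 1 -> a3 + d2 <= 1 -> b1 + b0 <= 1 -> b2 + b0 <= 1 -> b3 + b0 <= 1 -> b2 + b1 <= 1 -> b3 + b1 <= 1 -> b3 + b2 <= 1 -> b1 + c0 <= 1 -> b2 + c0 <= 1 -> b3 + c0 <= 1 -> b2 + c1 <= 1 -> b3 + c1 <= 1 -> b3 + c2 <= 1 -> b1 + d0 <= 1 -> b2 + d0 <= 1 -> b3 + d0 <= 1 -> b2 + d1 <= 1 -> b3 + d1 <= 1 -> b3 + d2 <= 1 -> c1 + c0 <= 1 -> c2 + c0 <= 1 -> c3 + c0 <= 1 ->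 c2 + c1 <= 1 -> c3 + c1 <= 1 -> c3 + c2 <= 1 -> c1 + d0 <= 1 -> c2 + d0 <= 1 -> c3 + d0 <= 1 -> c2 + d1 <= 1 -> c3 + d1 <= 1 -> c3 + d2 <= 1 -> d1 + d0 <= 1 -> d2 + d0 <= 1 -> d3 + d0 <= 1 -> d2 + d1 <= 1 -> d3 + d1 <= 1 -> d3 + d2 <= 1 ->
  [&& a0 + b0 + c0 + d0 == 1, a1 + b1 + c1 + d1 == 1, a2 + b2 + c2 + d2 == 1 & a3 + b3 + c3 + d3 == 1] = [&& a0, b1, c2 & d3].
Proof.
intros.
destruct a0, a1, a2, a3; simpl in *; try discriminate;
destruct b0, b1, b2, b3; simpl in *; try discriminate;
destruct c0, c1, c2, c3; simpl in *; try discriminate;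
destruct d0, d1, d2, d3; simpl in *; try discriminate; reflexivity.
Qed.

Lemma ord_c {n} {P Q : pred 'I_n} {x y : 'I_n} :
  (forall u v, Q u -> P v -> u < v) -> x <= y -> P x + Q y <= 1.
Proof.
move=> H xy; case Px: (P x); case Qy: (Q y) => //=.
by have := H _ _ Qy Px; rewrite ltnNge xy.
Qed.

Lemma uniq4 n (a b c d : 'I_n) : a < b -> b < c -> c < d -> uniq [:: a; b; c; d].
Proof. by move=> ab bc cd; rewrite /= !inE -!val_eqE /=; lia. Qed.

Lemma ordered_mem n (a b c d : 'I_n) (P0 P1 P2 P3 : pred 'I_n) :
  a < b -> b < c -> c < d ->
  (forall u v, P0 u -> P1 v -> u < v) -> (forall u v, P0 u -> P2 v -> u < v) ->
  (forall u v, P0 u -> P3 v -> u < v) -> (forall u v, P1 u -> P2 v -> u < v) ->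
  (forall u v, P1 u -> P3 v -> u < v) -> (forall u v, P2 u -> P3 v -> u < v) ->
  ([set a; b; c; d] \in edges4 (mkV P0 P1 P2 P3)) = [&& P0 a, P1 b, P2 c & P3 d].
Proof.
move=> ab bc cd H01 H02 H03 H12 H13 H23.
rewrite mem_edges4_mkV ?uniq4 // /cnt4.
apply: core_ord;
  first [ apply: (ord_c H01) | apply: (ord_c H02) | apply: (ord_c H03)
        | apply: (ord_c H12) | apply: (ord_c H13) | apply: (ord_c H23) ]; lia.
Qed.

Lemma mkV_valid n (P0 P1 P2 P3 : pred 'I_n) (x0 x1 x2 x3 : 'I_n) :
  P0 x0 -> P1 x1 -> P2 x2 -> P3 x3 ->
  (forall x, P0 x -> P1 x -> False) -> (forall x, P0 x -> P2 x -> False) ->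
  (forall x, P0 x -> P3 x -> False) -> (forall x, P1 x -> P2 x -> False) ->
  (forall x, P1 x -> P3 x -> False) -> (forall x, P2 x -> P3 x -> False) ->
  complete4partite (mkV P0 P1 P2 P3).
Proof.
move=> h0 h1 h2 h3 D01 D02 D03 D12 D13 D23.
have disj (P Q : pred 'I_n) : (forall x, P x -> Q x -> False) ->
    [disjoint [set x | P x] & [set x | Q x]].
  move=> H; rewrite -setI_eq0; apply/eqP/setP => x; rewrite !inE.
  by case px: (P x); case qx: (Q x) => //; case: (H x px qx).
have disj' (P Q : pred 'I_n) : (forall x, P x -> Q x -> False) ->
    [disjoint [set x | Q x] & [set x | P x]].
  by move=> H; rewrite disjoint_sym; exact: disj.
rewrite /complete4partite forall4 !ffunE /=.
apply/andP; split.
  apply/and4P; split; apply/set0Pn;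
    [exists x0|exists x1|exists x2|exists x3]; by rewrite inE.
rewrite forall4; apply/and4P; split; rewrite forall4 !ffunE; apply/and4P;
  split; (try by rewrite eqxx); apply/implyP => _;
  first [ apply: disj; assumption | apply: disj'; assumption ].
Qed.

Lemma piece_count n (I : finType) (P : pred I) (F : I -> {ffun 'I_4 -> {set 'I_n}})
  (e : {set 'I_n}) (C : bool) (c0 : I) :
  (forall i, P i -> (complete4partite (F i) && (e \in edges4 (F i))) = C && (i == c0)) ->
  (C -> P c0) ->
  count (fun V => complete4partite V && (e \in edges4 V)) [seq F i | i <- enum P] = C.
Proof.
move=> H HP; rewrite count_map.
rewrite (@eq_in_count _ _ (fun i => C && (i == c0))); last first.
  by move=> i; rewrite mem_enum => /H.
case: C H HP => H HP /=.
  rewrite (@eq_count _ _ (pred1 c0)) // count_uniq_mem ?enum_uniq //.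
  by rewrite mem_enum -[c0 \in P]/(P c0) HP.
by elim: (enum P).
Qed.

Lemma f4_le_seq n (s : seq {ffun 'I_4 -> {set 'I_n}}) :
  all (@complete4partite n) s ->
  (forall e : {set 'I_n}, e \in K4edges n -> count (fun V => e \in edges4 V) s = 1) ->
  f4 n <= size s.
Proof.
move=> Hall Hc; rewrite /f4 /min_partition_size.
case: ex_minnP => m _ Hmin; apply: Hmin.
apply/existsP; exists [ffun j : 'I_(size s) => nth [ffun=> set0] s j].
apply/andP; split.
  apply/forallP => j; rewrite ffunE; apply/andP; split.
    by apply: (allP Hall); rewrite mem_nth.
  by apply/subsetP => e; rewrite !inE => /andP[-> _].
apply/forall_inP => e he.
rewrite (_ : [set j | e \in _ ] = [set j : 'I_(size s) |
   (fun V => e \in edges4 V) (nth [ffun=> set0] s j)]); last first.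
  by apply/setP => j; rewrite !inE ffunE.
by rewrite (@card_nth_count _ [ffun=> set0] s (fun V => e \in edges4 V)) Hc.
Qed.

Lemma sort4 n (e : {set 'I_n}) : #|e| = 4 ->
  exists a b c d : 'I_n, [/\ a < b, b < c, c < d & e = [set a; b; c; d]].
Proof.
move=> he.
pose t := sort (fun x y : 'I_n => x <= y) (enum e).
have ht : size t = 4 by rewrite size_sort -cardE.
have ut : uniq t by rewrite sort_uniq enum_uniq.
have st : sorted (fun x y : 'I_n => x <= y) t.
  by apply: sort_sorted => x y; exact: leq_total.
have et : e = [set x in t] by apply/setP => x; rewrite inE mem_sort mem_enum.
move: ht ut st et; case: t => [|a [|b [|c [|d [|]]]]] //= _.
rewrite !inE -!val_eqE /= => hu /and4P[ab bc cd _] ee.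
exists a, b, c, d; split; try lia.
by rewrite ee set4E.
Qed.

Lemma gr_lt (S u v : nat) : u %/ S < v %/ S -> u < v.
Proof. by move=> h; rewrite ltnNge; apply/negP => /(leq_div2r S); lia. Qed.

Lemma ordered_piece n (a b c d : 'I_n) (P0 P1 P2 P3 : pred 'I_n) (X : bool) :
  a < b -> b < c -> c < d ->
  (forall u v, P0 u -> P1 v -> u < v) -> (forall u v, P0 u -> P2 v -> u < v) ->
  (forall u v, P0 u -> P3 v -> u < v) -> (forall u v, P1 u -> P2 v -> u < v) ->
  (forall u v, P1 u -> P3 v -> u < v) -> (forall u v, P2 u -> P3 v -> u < v) ->
  [&& P0 a, P1 b, P2 c & P3 d] = X ->
  complete4partite (mkV P0 P1 P2 P3) && ([set a; b; c; d] \in edges4 (mkV P0 P1 P2 P3)) = X.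
Proof.
move=> ab bc cd H01 H02 H03 H12 H13 H23 <-.
rewrite ordered_mem //.
case: (boolP [&& P0 a, P1 b, P2 c & P3 d]) => h; last by rewrite andbF.
case/and4P: h => h0 h1 h2 h3; rewrite andbT.
apply: (@mkV_valid n P0 P1 P2 P3 a b c d h0 h1 h2 h3) => x hx hx';
  [ have := H01 _ _ hx hx' | have := H02 _ _ hx hx' | have := H03 _ _ hx hx'
  | have := H12 _ _ hx hx' | have := H13 _ _ hx hx' | have := H23 _ _ hx hx'];
  by rewrite ltnn.
Qed.

Definition F1 (n k' s' : nat) (i : 'I_k'.+1 * 'I_k'.+1) : {ffun 'I_4 -> {set 'I_n}} :=
  mkV [pred x : 'I_n | x %/ s'.+1 < i.1] [pred x : 'I_n | x %/ s'.+1 == i.1]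
      [pred x : 'I_n | x %/ s'.+1 == i.2] [pred x : 'I_n | i.2 < x %/ s'.+1].
Definition P1 (k' : nat) : pred ('I_k'.+1 * 'I_k'.+1) := fun i => i.1 < i.2.

Lemma piece1 n k' s' (a b c d : 'I_n) : a < b -> b < c -> c < d -> n <= k'.+1 * s'.+1 ->
  count (fun V => complete4partite V && ([set a; b; c; d] \in edges4 V))
    [seq F1 n k' s' i | i <- enum (P1 k')] =
  [&& a %/ s'.+1 < b %/ s'.+1, b %/ s'.+1 < c %/ s'.+1 & c %/ s'.+1 < d %/ s'.+1].
Proof.
move=> ab bc cd hn.
have bn := ltn_ord b; have cn := ltn_ord c.
have gb : b %/ s'.+1 < k'.+1 by rewrite ltn_divLR //; lia.
have gc : c %/ s'.+1 < k'.+1 by rewrite ltn_divLR //; lia.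
have m1 := leq_div2r s'.+1 (ltnW ab).
have m2 := leq_div2r s'.+1 (ltnW bc).
have m3 := leq_div2r s'.+1 (ltnW cd).
apply: (@piece_count n _ _ _ _ _ (inord (b %/ s'.+1), inord (c %/ s'.+1))) =>
  [[i1 i2] Pi|H]; last by rewrite /P1 /= !inordK //; lia.
rewrite /P1 /= in Pi.
apply: ordered_piece => //= [u v h1 h2|u v h1 h2|u v h1 h2|u v h1 h2|u v h1 h2|u v h1 h2|];
  try (apply: (gr_lt s'.+1); lia).
by rewrite xpair_eqE -!val_eqE /= !inordK //; lia.
Qed.



Definition F2 (n k' s' : nat) (i : 'I_k'.+1 * 'I_n) : {ffun 'I_4 -> {set 'I_n}} :=
  mkV [pred x : 'I_n | x %/ s'.+1 < i.1] [pred x : 'I_n | x %/ s'.+1 == i.1]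
      [pred x : 'I_n | x == i.2]
      [pred x : 'I_n | (i.2 < x) && (x %/ s'.+1 == i.2 %/ s'.+1)].
Definition P2 (n k' s' : nat) : pred ('I_k'.+1 * 'I_n) := fun i => i.1 < i.2 %/ s'.+1.

Lemma piece2 n k' s' (a b c d : 'I_n) : a < b -> b < c -> c < d -> n <= k'.+1 * s'.+1 ->
  count (fun V => complete4partite V && ([set a; b; c; d] \in edges4 V))
    [seq F2 n k' s' i | i <- enum (P2 n k' s')] =
  [&& a %/ s'.+1 < b %/ s'.+1, b %/ s'.+1 < c %/ s'.+1 & c %/ s'.+1 == d %/ s'.+1].
Proof.
move=> ab bc cd hn.
have bn := ltn_ord b; have cn := ltn_ord c.
have gb : b %/ s'.+1 < k'.+1 by rewrite ltn_divLR //; lia.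
have m1 := leq_div2r s'.+1 (ltnW ab).
have m2 := leq_div2r s'.+1 (ltnW bc).
have m3 := leq_div2r s'.+1 (ltnW cd).
apply: (@piece_count n _ _ _ _ _ (inord (b %/ s'.+1), c)) =>
  [[i1 i2] Pi|H]; last by rewrite /P2 /= !inordK //; lia.
rewrite /P2 /= in Pi.
apply: ordered_piece => //= [||||||]; try (move=> u v /= h1 h2;
  try (move/eqP: h1 => h1; rewrite h1 in h2 * );
  try (move/eqP: h2 => h2; rewrite h2 in h1 * );
  try (apply: (gr_lt s'.+1); lia); try lia).
rewrite xpair_eqE; case: (eqVneq c i2) Pi => [<-|ne] Pi.
  by rewrite -val_eqE /= inordK //; lia.
by rewrite /= !andbF.
Qed.

Definition F3 (n k' s' : nat) (i : 'I_n * 'I_k'.+1) : {ffun 'I_4 -> {set 'I_n}} :=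
  mkV [pred x : 'I_n | (x < i.1) && (x %/ s'.+1 == i.1 %/ s'.+1)]
      [pred x : 'I_n | x == i.1]
      [pred x : 'I_n | x %/ s'.+1 == i.2] [pred x : 'I_n | i.2 < x %/ s'.+1].
Definition P3 (n k' s' : nat) : pred ('I_n * 'I_k'.+1) := fun i => i.1 %/ s'.+1 < i.2.

Lemma piece3 n k' s' (a b c d : 'I_n) : a < b -> b < c -> c < d -> n <= k'.+1 * s'.+1 ->
  count (fun V => complete4partite V && ([set a; b; c; d] \in edges4 V))
    [seq F3 n k' s' i | i <- enum (P3 n k' s')] =
  [&& a %/ s'.+1 == b %/ s'.+1, b %/ s'.+1 < c %/ s'.+1 & c %/ s'.+1 < d %/ s'.+1].
Proof.
move=> ab bc cd hn.
have bn := ltn_ord b; have cn := ltn_ord c.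
have gc : c %/ s'.+1 < k'.+1 by rewrite ltn_divLR //; lia.
have m1 := leq_div2r s'.+1 (ltnW ab).
have m2 := leq_div2r s'.+1 (ltnW bc).
have m3 := leq_div2r s'.+1 (ltnW cd).
apply: (@piece_count n _ _ _ _ _ (b, inord (c %/ s'.+1))) =>
  [[i1 i2] Pi|H]; last by rewrite /P3 /= !inordK //; lia.
rewrite /P3 /= in Pi.
apply: ordered_piece => //= [||||||]; try (move=> u v /= h1 h2;
  try (move/eqP: h1 => h1; rewrite h1 in h2 * );
  try (move/eqP: h2 => h2; rewrite h2 in h1 * );
  try (apply: (gr_lt s'.+1); lia); try lia).
rewrite xpair_eqE; case: (eqVneq b i1) Pi => [<-|ne] Pi.
  by rewrite -val_eqE /= inordK //; lia.
by rewrite /= !andbF.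
Qed.


Lemma same_grp (S b c : nat) : 0 < S -> b < c -> b %/ S = c %/ S -> c - b - 1 < S.
Proof.
move=> S0 bc e.
have hb := divn_eq b S; have hc := divn_eq c S; have hr := ltn_pmod c S0.
rewrite -e in hc; move: hb hc hr; move: (b %/ S * S) (b %% S) (c %% S) => q r1 r2.
lia.
Qed.

Definition F5 (n s' : nat) (i : 'I_n * 'I_s'.+1) : {ffun 'I_4 -> {set 'I_n}} :=
  mkV [pred x : 'I_n | x < i.1] [pred x : 'I_n | x == i.1]
      [pred x : 'I_n | (x : nat) == i.1 + i.2 + 1] [pred x : 'I_n | i.1 + i.2 + 1 < x].
Definition P5 (n s' : nat) : pred ('I_n * 'I_s'.+1) :=
  fun i => (i.1 + i.2 + 1 < n) && ((i.1 + i.2 + 1) %/ s'.+1 == i.1 %/ s'.+1).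

Lemma piece5 n s' (a b c d : 'I_n) : a < b -> b < c -> c < d ->
  count (fun V => complete4partite V && ([set a; b; c; d] \in edges4 V))
    [seq F5 n s' i | i <- enum (P5 n s')] = (b %/ s'.+1 == c %/ s'.+1).
Proof.
move=> ab bc cd.
have cn := ltn_ord c.
apply: (@piece_count n _ _ _ _ _ (b, inord (c - b - 1))) =>
  [[i1 i2] Pi|H]; last first.
  have hs := @same_grp s'.+1 b c (ltn0Sn s') bc (eqP H).
  rewrite /P5 /= !inordK //.
  have -> : b + (c - b - 1) + 1 = c by lia.
  by rewrite cn eq_sym.
rewrite /P5 /= in Pi.
apply: ordered_piece => //= [||||||]; try (move=> u v /= h1 h2;
  try (move/eqP: h1 => h1; rewrite h1 in h2 * );
  try (move/eqP: h2 => h2; rewrite h2 in h1 * );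
  try (apply: (gr_lt s'.+1); lia); try lia).
rewrite xpair_eqE; case: (eqVneq b i1) Pi => [<-|ne] Pi; last by rewrite /= !andbF.
rewrite /=.
have i2s := ltn_ord i2.
case: (eqVneq (c : nat) (b + i2 + 1)) => [hc|hc].
  move/andP: Pi => [_ /eqP Pe].
  rewrite hc Pe eqxx /= -val_eqE /= inordK; lia.
rewrite /= andbF.
case: (boolP (b %/ s'.+1 == c %/ s'.+1)) => //= hbc.
have hs := @same_grp s'.+1 b c (ltn0Sn s') bc (eqP hbc).
rewrite -val_eqE /= inordK //; lia.
Qed.

Lemma core22 (a0 a1 a2 a3 b0 b1 b2 b3 c0 c1 c2 c3 d0 d1 d2 d3 : bool) :
  a0 + a1 <= 1 -> a0 + a2 <= 1 -> a0 + a3 <= 1 -> a1 + a2 <= 1 -> a1 + a3 <= 1 -> a2 + a3 <= 1 -> b0 + b1 <= 1 -> b0 + b2 <= 1 -> b0 + b3 <= 1 -> b1 + b2 <= 1 -> b1 + b3 <= 1 -> b2 + b3 <= 1 -> c0 + c1 <= 1 -> c0 + c2 <= 1 -> c0 + c3 <= 1 -> c1 + c2 <= 1 -> c1 + c3 <= 1 -> c2 + c3 <= 1 -> d0 + d1 <= 1 -> d0 + d2 <= 1 -> d0 + d3 <= 1 -> d1 + d2 <= 1 -> d1 + d3 <= 1 -> d2 + d3 <= 1 -> a2 + b0 <= 1 -> a2 + b1 <= 1 -> a3 + b0 <= 1 -> a3 + b1 <= 1 -> a2 + c0 <= 1 -> a2 + c1 <= 1 -> a3 + c0 <= 1 ->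 a3 + c1 <= 1 -> a2 + d0 <= 1 -> a2 + d1 <= 1 -> a3 + d0 <= 1 -> a3 + d1 <= 1 -> b2 + c0 <= 1 -> b2 + c1 <= 1 -> b3 + c0 <= 1 -> b3 + c1 <= 1 -> b2 + d0 <= 1 -> b2 + d1 <= 1 -> b3 + d0 <= 1 -> b3 + d1 <= 1 -> c2 + d0 <= 1 -> c2 + d1 <= 1 -> c3 + d0 <= 1 -> c3 + d1 <= 1 ->
  [&& a0 + b0 + c0 + d0 == 1, a1 + b1 + c1 + d1 == 1, a2 + b2 + c2 + d2 == 1 & a3 + b3 + c3 + d3 == 1] = (a0 && b1 || a1 && b0) && (c2 && d3 || c3 && d2).
Proof.
intros.
destruct a0, a1, a2, a3; simpl in *; try discriminate;
destruct b0, b1, b2, b3; simpl in *; try discriminate;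
destruct c0, c1, c2, c3; simpl in *; try discriminate;
destruct d0, d1, d2, d3; simpl in *; try discriminate; reflexivity.
Qed.

Lemma excl (p q : bool) : (p -> q -> False) -> p + q <= 1.
Proof. by case: p; case: q => // /(_ isT isT). Qed.

Lemma mem_bip m (X Y : {set 'I_m}) (p q : 'I_m) :
  ([set p; q] \in bip_edges (X, Y)) = (p \in X) && (q \in Y) || (p \in Y) && (q \in X).
Proof.
apply/imset2P/idP => [[x y /= hx hy e]|].
  have hp : p \in [set x; y] by rewrite -e !inE eqxx.
  have hq : q \in [set x; y] by rewrite -e !inE eqxx orbT.
  have hx' : x \in [set p; q] by rewrite e !inE eqxx.
  have hy' : y \in [set p; q] by rewrite e !inE eqxx orbT.
  move: hp hq hx' hy'; rewrite !inE.
  case/orP=> /eqP ep; case/orP=> /eqP eq; subst p q;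
    try (by rewrite hx hy); try (by rewrite hx hy orbT);
    [ by move=> _ /orP[]/eqP ey; subst y; rewrite hx hy
    | by move=> /orP[]/eqP ex _; subst x; rewrite hx hy].
case/orP=> /andP[hp hq]; first by exists p q.
by exists q p => //; rewrite setUC.
Qed.

Lemma mkV_valid_mem n (e : {set 'I_n}) (P0 P1 P2 P3 : pred 'I_n) :
  e \in edges4 (mkV P0 P1 P2 P3) ->
  (forall x, P0 x -> P1 x -> False) -> (forall x, P0 x -> P2 x -> False) ->
  (forall x, P0 x -> P3 x -> False) -> (forall x, P1 x -> P2 x -> False) ->
  (forall x, P1 x -> P3 x -> False) -> (forall x, P2 x -> P3 x -> False) ->
  complete4partite (mkV P0 P1 P2 P3).
Proof.
rewrite inE forall4 !ffunE /= => /andP[_ /and4P[h0 h1 h2 h3]].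
case/cards1P: h0 => x0 /setP /(_ x0); rewrite !inE eqxx => /andP[_ p0].
case/cards1P: h1 => x1 /setP /(_ x1); rewrite !inE eqxx => /andP[_ p1].
case/cards1P: h2 => x2 /setP /(_ x2); rewrite !inE eqxx => /andP[_ p2].
case/cards1P: h3 => x3 /setP /(_ x3); rewrite !inE eqxx => /andP[_ p3].
exact: (@mkV_valid n P0 P1 P2 P3 x0 x1 x2 x3 p0 p1 p2 p3).
Qed.

Definition blockT (s : nat) :=
  (({set 'I_s} * {set 'I_s}) * ({set 'I_s} * {set 'I_s}))%type.
Definition pi (s' : nat) (x : nat) : 'I_s'.+1 := inord (x %% s'.+1).

Definition F4 n k' s' G (Fb : {ffun 'I_G -> blockT s'.+1})
  (i : ('I_k'.+1 * 'I_k'.+1) * 'I_G) : {ffun 'I_4 -> {set 'I_n}} :=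
  mkV [pred x : 'I_n | (x %/ s'.+1 == i.1.1) && (pi s' x \in (Fb i.2).1.1)]
      [pred x : 'I_n | (x %/ s'.+1 == i.1.1) && (pi s' x \in (Fb i.2).1.2)]
      [pred x : 'I_n | (x %/ s'.+1 == i.1.2) && (pi s' x \in (Fb i.2).2.1)]
      [pred x : 'I_n | (x %/ s'.+1 == i.1.2) && (pi s' x \in (Fb i.2).2.2)].

Lemma taut22 (ea eb ec ed ua va ub vb wc zc wd zd : bool) :
  (ea && ua && (eb && vb) || ea && va && (eb && ub)) &&
  (ec && wc && (ed && zd) || ec && zc && (ed && wd)) =
  [&& ea, eb, ec, ed & (ua && vb || va && ub) && (wc && zd || zc && wd)].
Proof. by case: ea; case: eb; case: ec; case: ed; case: ua; case: va; case: ub;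
  case: vb; case: wc; case: zc; case: wd; case: zd. Qed.

Lemma disjE m (X Y : {set 'I_m}) : [disjoint X & Y] -> forall z, z \in X -> z \in Y -> False.
Proof.
by rewrite -setI_eq0 => /eqP /setP H z hx hy; move: (H z); rewrite !inE hx hy.
Qed.

Lemma mem4 n k' s' G (Fb : {ffun 'I_G -> blockT s'.+1}) (a b c d : 'I_n)
  (i : ('I_k'.+1 * 'I_k'.+1) * 'I_G) :
  block_valid (Fb i.2) -> i.1.1 < i.1.2 -> a < b -> b < c -> c < d ->
  complete4partite (@F4 n k' s' G Fb i) && ([set a; b; c; d] \in edges4 (@F4 n k' s' G Fb i)) =
  [&& a %/ s'.+1 == i.1.1, b %/ s'.+1 == i.1.1, c %/ s'.+1 == i.1.2, d %/ s'.+1 == i.1.2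
    & (([set pi s' a; pi s' b], [set pi s' c; pi s' d]) \in block_edges (Fb i.2))].
Proof.
case: i => [[be ga] j] /=; rewrite /F4 /=.
case: (Fb j) => [[X1 Y1] [X2 Y2]].
rewrite /block_valid /complete_bip /= => /andP[/and3P[_ _ D1] /and3P[_ _ D2]] hbg ab bc cd.
have d1 := @disjE _ _ _ D1; have d2 := @disjE _ _ _ D2.
have m1 := leq_div2r s'.+1 (ltnW ab).
have m2 := leq_div2r s'.+1 (ltnW bc).
have m3 := leq_div2r s'.+1 (ltnW cd).
have m4 := leq_div2r s'.+1 (ltnW (ltn_trans ab bc)).
have m5 := leq_div2r s'.+1 (ltnW (ltn_trans bc cd)).
have m6 := leq_div2r s'.+1 (ltnW (ltn_trans ab (ltn_trans bc cd))).
have Hm : ([set a; b; c; d] \in edges4 (mkV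
      [pred x : 'I_n | (x %/ s'.+1 == be) && (pi s' x \in X1)]
      [pred x : 'I_n | (x %/ s'.+1 == be) && (pi s' x \in Y1)]
      [pred x : 'I_n | (x %/ s'.+1 == ga) && (pi s' x \in X2)]
      [pred x : 'I_n | (x %/ s'.+1 == ga) && (pi s' x \in Y2)])) =
   [&& a %/ s'.+1 == be, b %/ s'.+1 == be, c %/ s'.+1 == ga, d %/ s'.+1 == ga
    & (([set pi s' a; pi s' b], [set pi s' c; pi s' d]) \in
        block_edges ((X1, Y1), (X2, Y2)))].
  rewrite mem_edges4_mkV ?uniq4 // /cnt4 /=.
  rewrite core22; [ | apply: excl => /andP[h1 h1'] /andP[h2 h2'];
      first [ lia | exact: (d1 _ h1' h2') | exact: (d1 _ h2' h1')
            | exact: (d2 _ h1' h2') | exact: (d2 _ h2' h1') ] ..].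
  by rewrite /block_edges in_setX /= !mem_bip taut22.
rewrite Hm.
apply/idP/idP => [/andP[_ ->] // | hm].
rewrite hm andbT; rewrite -Hm in hm.
apply: (@mkV_valid_mem _ _ _ _ _ _ hm) => x /= /andP[h1 h1'] /andP[h2 h2'];
  first [ lia | exact: (d1 _ h1' h2') | exact: (d2 _ h1' h2') ].
Qed.

Definition P4 (k' G : nat) : pred (('I_k'.+1 * 'I_k'.+1) * 'I_G) := fun i => i.1.1 < i.1.2.

Lemma pi_neq s' (u v : nat) : u < v -> u %/ s'.+1 = v %/ s'.+1 -> pi s' u != pi s' v.
Proof.
move=> uv e; apply/eqP => /(congr1 (@nat_of_ord _)); rewrite /pi !inordK ?ltn_pmod // => hm.
have : u = v by rewrite (divn_eq u s'.+1) (divn_eq v s'.+1) e hm.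
lia.
Qed.

Lemma piece4 n k' s' G (Fb : {ffun 'I_G -> blockT s'.+1}) (a b c d : 'I_n) :
  (forall j, block_valid (Fb j)) ->
  (forall u, u \in KnKn s'.+1 -> #|[set j | u \in block_edges (Fb j)]| == 1) ->
  a < b -> b < c -> c < d -> n <= k'.+1 * s'.+1 ->
  count (fun V => complete4partite V && ([set a; b; c; d] \in edges4 V))
    [seq @F4 n k' s' G Fb i | i <- enum (P4 k' G)] =
  [&& a %/ s'.+1 == b %/ s'.+1, b %/ s'.+1 < c %/ s'.+1 & c %/ s'.+1 == d %/ s'.+1].
Proof.
move=> Hv Hu ab bc cd hn.
have bn := ltn_ord b; have cn := ltn_ord c.
have gb : b %/ s'.+1 < k'.+1 by rewrite ltn_divLR //; lia.
have gc : c %/ s'.+1 < k'.+1 by rewrite ltn_divLR //; lia.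
have m1 := leq_div2r s'.+1 (ltnW ab).
have m2 := leq_div2r s'.+1 (ltnW bc).
have m3 := leq_div2r s'.+1 (ltnW cd).
case: (boolP [&& a %/ s'.+1 == b %/ s'.+1, b %/ s'.+1 < c %/ s'.+1
              & c %/ s'.+1 == d %/ s'.+1]) => hc; last first.
  rewrite count_map; apply/eqP; rewrite -leqn0 leqNgt -has_count.
  apply/hasPn => -[[be ga] j]; rewrite mem_enum => Pi.
  have Pi' : be < ga := Pi.
  rewrite /preim /= (@mem4 n k' s' G Fb a b c d ((be,ga),j) (Hv j) Pi' ab bc cd) /=.
  apply/negP => /and5P[h1 h2 h3 h4 _]; move/negP: hc; apply.
  lia.
have [e1 _ e3] := and3P hc.
have pab := @pi_neq s' a b ab (eqP e1).
have pcd := @pi_neq s' c d cd (eqP e3).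
have hK : ([set pi s' a; pi s' b], [set pi s' c; pi s' d]) \in KnKn s'.+1.
  by rewrite /KnKn in_setX /Knedges !inE !cards2 pab pcd.
case/cards1P: (Hu _ hK) => j0 hj0.
have Hj j : (([set pi s' a; pi s' b], [set pi s' c; pi s' d]) \in block_edges (Fb j))
    = (j == j0).
  by move/setP: hj0 => /(_ j); rewrite !inE.
apply: (@piece_count n _ _ _ _ _ ((inord (b %/ s'.+1), inord (c %/ s'.+1)), j0)) =>
  [[[be ga] j] Pi|_]; last by rewrite /P4 /= !inordK //; lia.
have Pi' : be < ga := Pi.
rewrite (@mem4 n k' s' G Fb a b c d ((be,ga),j) (Hv j) Pi' ab bc cd) /=.
rewrite Hj !xpair_eqE -!val_eqE /= !inordK //.
lia.
Qed.

Lemma card_lt_pairs K : #|[set p : 'I_K * 'I_K | p.1 < p.2]| <= 'C(K, 2).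
Proof.
pose D := [set p : 'I_K * 'I_K | p.1 < p.2].
have inj : {in D &, injective (fun p : 'I_K * 'I_K => [set p.1; p.2])}.
  move=> [p1 p2] [q1 q2]; rewrite !inE /= => hp hq e.
  have h1 : p1 \in [set q1; q2] by rewrite -e !inE eqxx.
  have h2 : p2 \in [set q1; q2] by rewrite -e !inE eqxx orbT.
  have h3 : q1 \in [set p1; p2] by rewrite e !inE eqxx.
  have h4 : q2 \in [set p1; p2] by rewrite e !inE eqxx orbT.
  move: h1 h2 h3 h4; rewrite !inE -!val_eqE /= => h1 h2 h3 h4.
  have e1 : p1 = q1 by apply/eqP; rewrite -val_eqE /=; lia.
  have e2 : p2 = q2 by apply/eqP; rewrite -val_eqE /=; lia.
  by rewrite e1 e2.
rewrite -(card_in_imset inj) -[K in 'C(K, 2)]card_ord -card_draws.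
apply: subset_leq_card; apply/subsetP => A /imsetP [[p1 p2]]; rewrite !inE /= => hp ->.
by rewrite cards2 -val_eqE /= neq_ltn hp.
Qed.

Lemma card_P4 k' G : #|P4 k' G| <= 'C(k'.+1, 2) * G.
Proof.
have -> : #|P4 k' G| = #|setX [set p : 'I_k'.+1 * 'I_k'.+1 | p.1 < p.2] [set: 'I_G]|.
  by apply: eq_card => -[p j]; rewrite !inE andbT.
by rewrite cardsX cardsT card_ord leq_mul2r card_lt_pairs orbT.
Qed.

Lemma f4_bound n k' :
  f4 n <= k'.+1 * k'.+1 + k'.+1 * n + n * k'.+1
          + 'C(k'.+1, 2) * g (n %/ k'.+1).+1 + n * (n %/ k'.+1).+1.
Proof.
set s' := n %/ k'.+1.
have hn : n <= k'.+1 * s'.+1.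
  have := divn_eq n k'.+1; have := ltn_pmod n (ltn0Sn k').
  rewrite -/s'; move: (n %% k'.+1) => r; lia.
have [Fb [Hv Hu]] : exists Fb : {ffun 'I_(g s'.+1) -> blockT s'.+1},
    (forall j, block_valid (Fb j)) /\
    (forall u, u \in KnKn s'.+1 -> #|[set j | u \in block_edges (Fb j)]| == 1).
  rewrite /g /min_partition_size; case: ex_minnP => m /existsP[Fb /andP[h1 h2]] _.
  exists Fb; split; first by move=> j; case/andP: (forallP h1 j).
  by move=> u hu; exact: (forall_inP h2 u hu).
pose s_all := [seq F1 n k' s' i | i <- enum (P1 k')] ++
              [seq F2 n k' s' i | i <- enum (P2 n k' s')] ++
              [seq F3 n k' s' i | i <- enum (P3 n k' s')] ++
              [seq @F4 n k' s' _ Fb i | i <- enum (P4 k' (g s'.+1))] ++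
              [seq F5 n s' i | i <- enum (P5 n s')].
apply: leq_trans (@f4_le_seq n (filter (@complete4partite n) s_all) _ _) _.
- exact: filter_all.
- move=> e; rewrite inE => /eqP /sort4 [a [b [c [d [ab bc cd ->]]]]].
  rewrite count_filter.
  rewrite (@eq_count _ _ (fun V => complete4partite V && ([set a; b; c; d] \in edges4 V)));
    last by move=> V; rewrite /= andbC.
  rewrite !count_cat piece1 // piece2 // piece3 // (@piece4 n k' s' _ Fb a b c d Hv Hu ab bc cd hn) piece5 //.
  have m1 := leq_div2r s'.+1 (ltnW ab).
  have m2 := leq_div2r s'.+1 (ltnW bc).
  have m3 := leq_div2r s'.+1 (ltnW cd).
  lia.
rewrite size_filter (leq_trans (count_size _ _)) //.
rewrite !size_cat !size_map -!cardE.
have c1 : #|P1 k'| <= k'.+1 * k'.+1 by apply: leq_trans (max_card _) _; rewrite card_prod !card_ord.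
have c2 : #|P2 n k' s'| <= k'.+1 * n by apply: leq_trans (max_card _) _; rewrite card_prod !card_ord.
have c3 : #|P3 n k' s'| <= n * k'.+1 by apply: leq_trans (max_card _) _; rewrite card_prod !card_ord.
have c4 := card_P4 k' (g s'.+1).
have c5 : #|P5 n s'| <= n * s'.+1 by apply: leq_trans (max_card _) _; rewrite card_prod !card_ord.
apply: leq_trans (leq_add c1 (leq_add c2 (leq_add c3 (leq_add c4 c5)))) _.
by rewrite !addnA.
Qed.

Local Open Scope ring_scope.

Lemma real_step (R : realType) (alpha eps x k sr cr gr : R) :
  0 < alpha -> 0 < eps -> 1 <= x -> 1 <= k -> 0 <= sr -> 0 <= cr -> 0 <= gr ->
  4 < alpha * eps * k ->
  4 * (k ^+ 2 + 2 * k + alpha * (2 * k + k ^+ 2) / 2 + 1) < alpha * eps * x ->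
  gr <= alpha * sr ^+ 2 -> 2 * cr <= k ^+ 2 -> k * sr <= x + k ->
  k * k + k * x + x * k + cr * gr + x * sr <= alpha * (1 + eps) * x ^+ 2 / 2.
Proof.
move=> a0 e0 x1 k1 s0 c0 g0 hk hx hg hc hs.
have h1 : cr * gr <= alpha * (x + k) ^+ 2 / 2.
  have t1 : cr * gr <= cr * (alpha * sr ^+ 2) by apply: ler_wpM2l.
  have t2 : (k * sr) ^+ 2 <= (x + k) ^+ 2.
    by rewrite ler_sqr ?nnegrE; [| apply: mulr_ge0; lra | lra].
  nra.
have h2 : x * sr * k <= x * (x + k) by rewrite -mulrA; apply: ler_wpM2l; lra.
have kp : 0 < k by lra.
have k0 : k != 0 by rewrite gt_eqF.
have h3 : x * sr <= x ^+ 2 / k + x.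
  have -> : x ^+ 2 / k + x = (x * (x + k)) / k by field.
  by rewrite ler_pdivlMr.
have h4 : x ^+ 2 / k <= alpha * eps * x ^+ 2 / 4.
  rewrite ler_pdivrMr //.
  have : 0 <= x ^+ 2 by apply: sqr_ge0.
  nra.
have h5 : k ^+ 2 + 2 * k * x + alpha * (2 * k * x + k ^+ 2) / 2 + x <= alpha * eps * x ^+ 2 / 4.
  have f1 : 0 <= k ^+ 2 * (x - 1) by apply: mulr_ge0; [apply: sqr_ge0 | lra].
  have f2 : 0 <= alpha * k ^+ 2 * (x - 1) by apply: mulr_ge0; [apply: mulr_ge0; [lra | apply: sqr_ge0] | lra].
  have f3 : 0 <= (alpha * eps * x - 4 * (k ^+ 2 + 2 * k + alpha * (2 * k + k ^+ 2) / 2 + 1)) * x.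
    by apply: mulr_ge0; lra.
  lra.
nra.
Qed.

Lemma bin2_le (K : nat) : (2 * 'C(K, 2) <= K * K)%N.
Proof.
rewrite bin2.
have h := odd_double_half (K * K.-1).
have h2 : (K * K.-1 <= K * K)%N := leq_mul (leqnn _) (leq_pred _).
rewrite -mul2n in h.
move: h h2; move: ((K * K.-1)./2) (odd (K * K.-1)) (K * K.-1) => q o m.
lia.
Qed.

Theorem mainTheorem3 (R : realType) (alpha : R) :
  0 < alpha ->
  (forall n : nat, (g n)%:R <= alpha * (n%:R) ^+ 2) ->
  forall eps : R, 0 < eps ->
  exists N : nat, forall n : nat, (N <= n)%N ->
    (f4 n)%:R <= alpha * (1 + eps) * (n%:R) ^+ 2 / 2.
Proof.
move=> a0 hg eps e0.
have ae0 : 0 < alpha * eps by apply: mulr_gt0.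
set k' := Num.truncn (4 / (alpha * eps)).
have hk : 4 < alpha * eps * (k'.+1)%:R.
  have := truncnS_gt (4 / (alpha * eps)); rewrite -/k' ltr_pdivrMr //.
  by rewrite mulrC.
set kr : R := (k'.+1)%:R.
have k1 : 1 <= kr by rewrite /kr ler1n.
set M : R := kr ^+ 2 + 2 * kr + alpha * (2 * kr + kr ^+ 2) / 2 + 1.
exists (Num.truncn (4 * M / (alpha * eps))).+1 => n hn.
have x1 : 1 <= (n%:R : R) by rewrite ler1n; apply: leq_trans hn.
have hx : 4 * M < alpha * eps * n%:R.
  have := truncnS_gt (4 * M / (alpha * eps)); rewrite ltr_pdivrMr // => h.
  have := hn; rewrite -(ler_nat R) => h'.
  nra.
have := f4_bound n k'; rewrite -(ler_nat R) => hb.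
apply: le_trans hb _.
rewrite 4!natrD !natrM.
apply: real_step => //.
- have := bin2_le k'.+1; rewrite -(ler_nat R) !natrM => h.
  by rewrite expr2.
- have : (k'.+1 * (n %/ k'.+1).+1 <= n + k'.+1)%N.
    rewrite mulnS addnC leq_add2r mulnC; exact: leq_trunc_div.
  by rewrite -natrM -natrD ler_nat.
Qed.
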